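(* Let $S \subset \mathbb{R}^3$ be a path of length $1$ which is a segment of a (planar) logarithmic spiral starting at its center $0$ and ending at a point $u$. Then the distortion of $S$, namely $\sup_{v\neq w \in S} d_S(v,w)/|v-w|$ where $d_S(v,w)$ is the length of the subarc of $S$ between $v$ and $w$, equals $1/|u|$. Moreover, for every path $\alpha\subset\mathbb{R}^3$ of length $1$ whose diameter is at most $2|u|$, one has $\sup_{v\neq w\in\alpha} d_\alpha(v,w)/|v-w| \geq \frac{1}{2}\cdot\frac{1}{|u|}$.
   Context: A logarithmic spiral centered at $0$ is (up to rotation and scaling, inside a plane through $0$) the curve $\{0\}\cup\{e^{ks}(\cos s,\sin s): s\in\mathbb{R}\}$ for some $k>0$; a segment starting at the center is the closure of its part with $s\in(-\infty,s_1]$. $|\cdot|$ denotes the Euclidean norm. *)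

(* Defs.v *)
From Stdlib Require Import Reals Lra List Sorted.
Open Scope R_scope.

Definition R3 : Type := (R * R * R)%type.

Definition vadd (p q : R3) : R3 :=
  let '(x1, y1, z1) := p in let '(x2, y2, z2) := q in (x1 + x2, y1 + y2, z1 + z2).
Definition vscale (a : R) (p : R3) : R3 :=
  let '(x, y, z) := p in (a * x, a * y, a * z).
Definition vsub (p q : R3) : R3 := vadd p (vscale (-1) q).
Definition dot (p q : R3) : R :=
  let '(x1, y1, z1) := p in let '(x2, y2, z2) := q in x1 * x2 + y1 * y2 + z1 * z2.
Definition vzero : R3 := (0, 0, 0).

Definition norm (p : R3) : R := sqrt (dot p p).
Definition dist3 (p q : R3) : R := norm (vsub p q).

Definition continuous_on01 (g : R -> R3) : Prop :=
  forall x, 0 <= x <= 1 -> forall eps, eps > 0 ->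
    exists delta, delta > 0 /\
      forall y, 0 <= y <= 1 -> Rabs (y - x) < delta -> dist3 (g y) (g x) < eps.

Definition is_path (g : R -> R3) : Prop :=
  continuous_on01 g /\
  (forall s t, 0 <= s <= 1 -> 0 <= t <= 1 -> g s = g t -> s = t).

Fixpoint poly_len (g : R -> R3) (x : R) (l : list R) : R :=
  match l with
  | nil => 0
  | y :: l' => dist3 (g x) (g y) + poly_len g y l'
  end.

Definition inscribed_lengths (g : R -> R3) (a b : R) (r : R) : Prop :=
  exists l, Sorted Rle (a :: l) /\ last (a :: l) a = b /\ r = poly_len g a l.

Definition curve_length (g : R -> R3) (a b L : R) : Prop :=
  is_lub (inscribed_lengths g a b) L.

Definition distortion_ratios (g : R -> R3) (r : R) : Prop :=
  exists s t L : R, 0 <= s /\ s < t /\ t <= 1 /\ g s <> g t /\ curve_length g s t L /\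
    r = L / dist3 (g s) (g t).

(* Segment of a logarithmic spiral  {0} U { c e^{k s}(cos s e1 + sin s e2) : s <= s1 },
   parametrized over [0,1] by tau |-> point with spiral parameter s1 + ln(tau)/k
   (tau = 0 gives the center 0). *)
Definition spiral_point (k c : R) (e1 e2 : R3) (s : R) : R3 :=
  vscale (c * exp (k * s)) (vadd (vscale (cos s) e1) (vscale (sin s) e2)).

Definition spiral_path (k c : R) (e1 e2 : R3) (s1 : R) (tau : R) : R3 :=
  if Rle_dec tau 0 then vzero else spiral_point k c e1 e2 (s1 + ln tau / k).

Definition orthonormal (e1 e2 : R3) : Prop :=
  dot e1 e1 = 1 /\ dot e2 e2 = 1 /\ dot e1 e2 = 0.

(* Main.v *)
Require Import Defs.
From Stdlib Require Import Reals Lra List Sorted.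
Open Scope R_scope.

Lemma last_indep : forall l (x d d' : R), last (x::l) d = last (x::l) d'.
Proof. induction l as [|y l IH]; intros x d d'; [reflexivity|]. simpl. apply IH. Qed.

Lemma last_app : forall l1 l2 (x d : R),
  last (x :: l1 ++ l2) d = last (last (x::l1) d :: l2) d.
Proof.
  induction l1 as [|y l1 IH]; intros l2 x d; [reflexivity|].
  change (last (y :: l1 ++ l2) d = last (last (y::l1) d :: l2) d). apply IH.
Qed.

Lemma sorted_app : forall l1 l2 (x : R), Sorted Rle (x::l1) ->
  Sorted Rle (last (x::l1) x :: l2) -> Sorted Rle (x :: l1 ++ l2).
Proof.
  induction l1 as [|y l1 IH]; intros l2 x H1 H2; [exact H2|].
  apply Sorted_inv in H1 as [Hs Hd]. apply HdRel_inv in Hd.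
  constructor.
  - apply IH; auto. change (last (x::y::l1) x) with (last (y::l1) x) in H2.
    rewrite (last_indep l1 y y x). exact H2.
  - constructor. exact Hd.
Qed.

Lemma poly_len_app : forall g l1 l2 x,
  poly_len g x (l1++l2) = poly_len g x l1 + poly_len g (last (x::l1) x) l2.
Proof.
  intros g; induction l1 as [|y l1 IH]; intros l2 x.
  - simpl. ring.
  - change ((y :: l1) ++ l2) with (y :: (l1 ++ l2)).
    change (last (x :: y :: l1) x) with (last (y :: l1) x).
    change (poly_len g x (y :: l1 ++ l2)) with (dist3 (g x) (g y) + poly_len g y (l1 ++ l2)).
    change (poly_len g x (y :: l1)) with (dist3 (g x) (g y) + poly_len g y l1).
    rewrite IH. rewrite (last_indep l1 y y x). ring.
Qed.

Lemma inscribed_concat : forall g a b c p q,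
  inscribed_lengths g a b p -> inscribed_lengths g b c q -> inscribed_lengths g a c (p+q).
Proof.
  intros g a b c p q [l1 [Hs1 [Hl1 Hp]]] [l2 [Hs2 [Hl2 Hq]]].
  exists (l1 ++ l2). split; [|split].
  - apply sorted_app; auto. rewrite Hl1. exact Hs2.
  - rewrite last_app. rewrite Hl1. rewrite (last_indep l2 b a b). exact Hl2.
  - rewrite poly_len_app, Hl1. subst; reflexivity.
Qed.

Lemma sorted_map_mono : forall (f : R -> R) l, (forall x y, x <= y -> f x <= f y) ->
  Sorted Rle l -> Sorted Rle (map f l).
Proof.
  intros f l Hf H. induction H; simpl; constructor; auto.
  destruct H0; simpl; constructor. apply Hf; auto.
Qed.

Lemma sorted_nonneg : forall l (a : R), Sorted Rle (a::l) -> Forall (Rle a) l.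
Proof.
  intros l a H. apply Sorted_StronglySorted in H.
  - apply StronglySorted_inv in H. tauto.
  - intros x y z; apply Rle_trans.
Qed.

Lemma last_map : forall (f : R -> R) l x d, last (f x :: map f l) (f d) = f (last (x::l) d).
Proof.
  intros f; induction l as [|y l IH]; intros x d; [reflexivity|].
  change (last (f y :: map f l) (f d) = f (last (y::l) d)). apply IH.
Qed.

Definition U (e1 e2 : R3) (a : R) : R3 := vadd (vscale (cos a) e1) (vscale (sin a) e2).

Lemma dot_formula : forall e1 e2 A B al be, orthonormal e1 e2 ->
  dot (vsub (vscale A (U e1 e2 al)) (vscale B (U e1 e2 be)))
      (vsub (vscale A (U e1 e2 al)) (vscale B (U e1 e2 be)))
  = A^2 + B^2 - 2*A*B*(cos al * cos be + sin al * sin be).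
Proof.
  intros [[x1 y1] z1] [[x2 y2] z2] A B al be [H1 [H2 H3]].
  unfold dot in H1, H2, H3. unfold U, dot, vsub, vadd, vscale. cbn.
  transitivity ((A*cos al - B*cos be)^2*(x1 * x1 + y1 * y1 + z1 * z1)
     + 2*(A*cos al - B*cos be)*(A*sin al - B*sin be)*(x1 * x2 + y1 * y2 + z1 * z2)
     + (A*sin al - B*sin be)^2*(x2 * x2 + y2 * y2 + z2 * z2)); [ring|].
  rewrite H1, H2, H3.
  pose proof (sin2_cos2 al) as Ha. pose proof (sin2_cos2 be) as Hb. unfold Rsqr in Ha, Hb.
  transitivity (A^2*(sin al * sin al + cos al * cos al) + B^2*(sin be * sin be + cos be * cos be)
     - 2*A*B*(cos al * cos be + sin al * sin be)); [ring|].
  rewrite Ha, Hb. ring.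
Qed.

Lemma dot_formula1 : forall e1 e2 A al, orthonormal e1 e2 ->
  dot (vscale A (U e1 e2 al)) (vscale A (U e1 e2 al)) = A^2.
Proof.
  intros [[x1 y1] z1] [[x2 y2] z2] A al [H1 [H2 H3]].
  unfold dot in H1, H2, H3. unfold U, dot, vadd, vscale. cbn.
  transitivity ((A*cos al)^2*(x1 * x1 + y1 * y1 + z1 * z1)
     + 2*(A*cos al)*(A*sin al)*(x1 * x2 + y1 * y2 + z1 * z2)
     + (A*sin al)^2*(x2 * x2 + y2 * y2 + z2 * z2)); [ring|].
  rewrite H1, H2, H3.
  pose proof (sin2_cos2 al) as Ha. unfold Rsqr in Ha.
  transitivity (A^2*(sin al * sin al + cos al * cos al)); [ring|].
  rewrite Ha. ring.
Qed.

Lemma path_eq : forall k c e1 e2 s1 a, k > 0 -> 0 <= a ->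
  spiral_path k c e1 e2 s1 a = vscale (c*exp(k*s1)*a) (U e1 e2 (s1 + ln a / k)).
Proof.
  intros k c e1 e2 s1 a Hk Ha. unfold spiral_path. destruct (Rle_dec a 0).
  - assert (a = 0) by lra. subst a. rewrite Rmult_0_r.
    destruct (U e1 e2 (s1 + ln 0 / k)) as [[x y] z]. unfold vscale, vzero.
    f_equal; [f_equal|]; ring.
  - unfold spiral_point. f_equal.
    replace (k*(s1+ln a/k)) with (k*s1 + ln a) by (field; lra).
    rewrite exp_plus, exp_ln by lra. ring.
Qed.

Lemma dform : forall k c e1 e2 s1 a b, k > 0 -> orthonormal e1 e2 -> 0 <= a -> 0 <= b ->
  dot (vsub (spiral_path k c e1 e2 s1 a) (spiral_path k c e1 e2 s1 b))
      (vsub (spiral_path k c e1 e2 s1 a) (spiral_path k c e1 e2 s1 b))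
  = (c*exp(k*s1))^2 * (a^2 + b^2 - 2*a*b*cos((s1 + ln a / k) - (s1 + ln b / k))).
Proof.
  intros. rewrite !path_eq by auto. rewrite dot_formula by auto. rewrite cos_minus. ring.
Qed.

Lemma dot_scale : forall k c e1 e2 s1 lam a b, k > 0 -> orthonormal e1 e2 -> lam > 0 ->
  0 <= a -> 0 <= b ->
  dot (vsub (spiral_path k c e1 e2 s1 (lam*a)) (spiral_path k c e1 e2 s1 (lam*b)))
      (vsub (spiral_path k c e1 e2 s1 (lam*a)) (spiral_path k c e1 e2 s1 (lam*b)))
  = lam^2 * dot (vsub (spiral_path k c e1 e2 s1 a) (spiral_path k c e1 e2 s1 b))
      (vsub (spiral_path k c e1 e2 s1 a) (spiral_path k c e1 e2 s1 b)).
Proof.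
  intros k c e1 e2 s1 lam a b Hk Ho Hl Ha Hb.
  rewrite !dform by (auto; nra).
  destruct (Req_dec a 0) as [E|E]; [subst; ring|].
  destruct (Req_dec b 0) as [E'|E']; [subst; ring|].
  replace (s1 + ln (lam*a) / k - (s1 + ln (lam*b) / k)) with (s1 + ln a / k - (s1 + ln b / k)).
  - ring.
  - rewrite !ln_mult by lra. field. lra.
Qed.

Lemma dist_scale : forall k c e1 e2 s1 lam a b, k > 0 -> orthonormal e1 e2 -> lam > 0 ->
  0 <= a -> 0 <= b ->
  dist3 (spiral_path k c e1 e2 s1 (lam*a)) (spiral_path k c e1 e2 s1 (lam*b))
  = lam * dist3 (spiral_path k c e1 e2 s1 a) (spiral_path k c e1 e2 s1 b).
Proof.
  intros. unfold dist3, norm. rewrite dot_scale by auto.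
  rewrite sqrt_mult_alt by (apply pow_le; lra). rewrite sqrt_pow2 by lra. reflexivity.
Qed.

Lemma dist_lower : forall k c e1 e2 s1 a b, k > 0 -> c > 0 -> orthonormal e1 e2 ->
  0 <= a -> a <= b ->
  c*exp(k*s1)*(b-a) <= dist3 (spiral_path k c e1 e2 s1 a) (spiral_path k c e1 e2 s1 b).
Proof.
  intros k c e1 e2 s1 a b Hk Hc Ho Ha Hab. unfold dist3, norm.
  rewrite dform by (auto; lra).
  assert (Hr : 0 < c*exp(k*s1)) by (apply Rmult_lt_0_compat; [lra|apply exp_pos]).
  rewrite <- (sqrt_pow2 (c*exp(k*s1)*(b-a))) by (apply Rmult_le_pos; lra).
  apply sqrt_le_1_alt.
  set (C := cos (s1 + ln a / k - (s1 + ln b / k))).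
  assert (HC : C <= 1) by (apply COS_bound).
  set (r := c*exp(k*s1)) in *.
  assert (0 <= r^2*(a*b)*(1-C)).
  { apply Rmult_le_pos; [apply Rmult_le_pos|]; try lra; try nra. }
  nra.
Qed.

Lemma sp0 : forall k c e1 e2 s1, spiral_path k c e1 e2 s1 0 = vzero.
Proof. intros. unfold spiral_path. destruct (Rle_dec 0 0); [reflexivity|lra]. Qed.

Lemma vsub_zero : forall p, dot (vsub vzero p) (vsub vzero p) = dot p p.
Proof. intros [[x y] z]. unfold dot, vsub, vadd, vscale, vzero. cbn. ring. Qed.

Lemma norm_vzero : norm vzero = 0.
Proof. unfold norm, dot, vzero. replace (0*0+0*0+0*0) with 0 by ring. apply sqrt_0. Qed.

Lemma norm_u : forall k c e1 e2 s1, k > 0 -> c > 0 -> orthonormal e1 e2 ->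
  norm (spiral_path k c e1 e2 s1 1) = c*exp(k*s1).
Proof.
  intros. unfold norm. rewrite path_eq by lra. rewrite dot_formula1 by auto.
  rewrite Rmult_1_r. apply sqrt_pow2.
  apply Rlt_le, Rmult_lt_0_compat; [lra|apply exp_pos].
Qed.

Lemma dist_pos : forall p q, p <> q -> 0 < dist3 p q.
Proof.
  intros [[x1 y1] z1] [[x2 y2] z2] Hne. unfold dist3, norm, dot, vsub, vadd, vscale. cbn.
  match goal with |- 0 < sqrt ?X => destruct (Rle_lt_dec X 0) end.
  - exfalso. apply Hne.
    pose proof (Rle_0_sqr (x1 + -1*x2)); pose proof (Rle_0_sqr (y1 + -1*y2));
    pose proof (Rle_0_sqr (z1 + -1*z2)); unfold Rsqr in *.
    assert (A1 : (x1 + -1*x2)*(x1 + -1*x2) = 0) by lra.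
    assert (A2 : (y1 + -1*y2)*(y1 + -1*y2) = 0) by lra.
    assert (A3 : (z1 + -1*z2)*(z1 + -1*z2) = 0) by lra.
    apply Rmult_integral in A1; apply Rmult_integral in A2; apply Rmult_integral in A3.
    f_equal; [f_equal|]; lra.
  - apply sqrt_lt_R0; auto.
Qed.

Lemma poly_scale : forall k c e1 e2 s1 lam, k > 0 -> orthonormal e1 e2 -> lam > 0 ->
  forall l a, 0 <= a -> Forall (Rle 0) l ->
  poly_len (spiral_path k c e1 e2 s1) (lam*a) (map (Rmult lam) l)
  = lam * poly_len (spiral_path k c e1 e2 s1) a l.
Proof.
  intros k c e1 e2 s1 lam Hk Ho Hl l. induction l as [|y l IH]; intros a Ha Hf; simpl.
  - ring.
  - inversion Hf; subst. rewrite dist_scale by auto. rewrite IH by auto. ring.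
Qed.

Lemma insc_scale : forall k c e1 e2 s1 lam b x, k > 0 -> orthonormal e1 e2 -> lam > 0 ->
  inscribed_lengths (spiral_path k c e1 e2 s1) 0 b x ->
  inscribed_lengths (spiral_path k c e1 e2 s1) 0 (lam*b) (lam*x).
Proof.
  intros k c e1 e2 s1 lam b x Hk Ho Hl [l [Hs [Hlast Hx]]].
  exists (map (Rmult lam) l). split; [|split].
  - assert (H := sorted_map_mono (Rmult lam) (0::l)).
    simpl in H. rewrite Rmult_0_r in H. apply H; auto.
    intros; apply Rmult_le_compat_l; lra.
  - assert (E := last_map (Rmult lam) l 0 0). rewrite Rmult_0_r in E.
    rewrite E, Hlast. reflexivity.
  - subst x. assert (P := poly_scale k c e1 e2 s1 lam Hk Ho Hl l 0 (Rle_refl 0)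
      (sorted_nonneg l 0 Hs)). rewrite Rmult_0_r in P. symmetry. exact P.
Qed.

Theorem mainTheorem3 (k c : R) (e1 e2 : R3) (s1 : R) :
  k > 0 -> c > 0 -> orthonormal e1 e2 ->
  curve_length (spiral_path k c e1 e2 s1) 0 1 1 ->
  let u := spiral_path k c e1 e2 s1 1 in
  is_lub (distortion_ratios (spiral_path k c e1 e2 s1)) (1 / norm u) /\
  (forall alpha : R -> R3,
     is_path alpha ->
     curve_length alpha 0 1 1 ->
     (forall s t, 0 <= s <= 1 -> 0 <= t <= 1 ->
        dist3 (alpha s) (alpha t) <= 2 * norm u) ->
     forall D, is_upper_bound (distortion_ratios alpha) D ->
       D >= (1 / 2) * (1 / norm u)).
Proof.
  intros Hk Hc Ho Hlen. cbv zeta.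
  set (g := spiral_path k c e1 e2 s1).
  assert (Hr : 0 < c*exp(k*s1)) by (apply Rmult_lt_0_compat; [lra|apply exp_pos]).
  assert (Hnu : norm (g 1) = c*exp(k*s1)) by (apply norm_u; auto).
  split; [split|].
  - intros x [s [t [L [Hs [Hst [Ht [Hne [HL Hx]]]]]]]]. subst x.
    assert (HLt : L <= t - s).
    { apply (proj2 HL). intros p Hp.
      assert (Key : forall q, inscribed_lengths g 0 s q -> q + p <= t).
      { intros q Hq. assert (H := inscribed_concat g 0 s t q p Hq Hp).
        apply (insc_scale k c e1 e2 s1 (/t)) in H; auto; [|apply Rinv_0_lt_compat; lra].
        rewrite Rinv_l in H by lra. apply (proj1 Hlen) in H.
        apply Rmult_le_reg_l with (/t); [apply Rinv_0_lt_compat; lra|].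
        rewrite Rinv_l by lra. exact H. }
      destruct (Req_dec s 0) as [E|E].
      - subst s. assert (0 + p <= t); [|lra]. apply Key.
        exists nil. split; [constructor; constructor|split; reflexivity].
      - assert (Hub : is_upper_bound (inscribed_lengths g 0 1) ((t-p)/s)).
        { intros y Hy. apply (insc_scale k c e1 e2 s1 s) in Hy; auto; [|lra].
          rewrite Rmult_1_r in Hy. apply Key in Hy.
          apply Rmult_le_reg_l with s; [lra|]. unfold Rdiv.
          replace (s * ((t-p) * /s)) with (t-p) by (field; lra). lra. }
        apply (proj2 Hlen) in Hub.
        apply Rmult_le_compat_l with (r := s) in Hub; [|lra].
        replace (s * ((t-p)/s)) with (t-p) in Hub by (field; lra). lra. }
    assert (Hd := dist_lower k c e1 e2 s1 s t Hk Hc Ho Hs (Rlt_le _ _ Hst)).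
    fold g in Hd. rewrite Hnu.
    set (r := c*exp(k*s1)) in *. set (d := dist3 (g s) (g t)) in *.
    assert (Hdp : 0 < d) by nra.
    unfold Rdiv. rewrite Rmult_1_l.
    apply Rmult_le_reg_l with (d*r); [nra|].
    replace (d*r*(L*/d)) with (r*L) by (field; lra).
    replace (d*r*/r) with d by (field; lra). nra.
  - intros bnd Hb. apply Hb. exists 0, 1, 1.
    assert (Hd01 : dist3 (g 0) (g 1) = norm (g 1)).
    { unfold dist3, norm, g. rewrite sp0, vsub_zero. reflexivity. }
    split; [lra|split; [lra|split; [lra|split; [|split; [exact Hlen|]]]]].
    + intro E. assert (norm (g 0) = norm (g 1)) by (rewrite E; reflexivity).
      unfold g in H. rewrite sp0, norm_vzero in H. fold g in H. lra.
    + rewrite Hd01. reflexivity.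
  - intros alpha [Hcont Hinj] Hal Hdiam D HD. apply Rle_ge.
    assert (Hne : alpha 0 <> alpha 1).
    { intro E. apply Hinj in E; lra. }
    assert (Hdp := dist_pos _ _ Hne).
    assert (Hdl := Hdiam 0 1 ltac:(lra) ltac:(lra)).
    assert (HD1 : 1 / dist3 (alpha 0) (alpha 1) <= D).
    { apply HD. exists 0, 1, 1.
      split; [lra|split; [lra|split; [lra|split; [exact Hne|split; [exact Hal|reflexivity]]]]]. }
    fold g in Hdl. rewrite Hnu in Hdl |- *.
    apply Rle_trans with (1 / dist3 (alpha 0) (alpha 1)); [|exact HD1].
    replace (1/2*(1/(c*exp(k*s1)))) with (/(2*(c*exp(k*s1))))
      by (pose proof (exp_pos (k*s1)); field; split; lra).
    unfold Rdiv. rewrite Rmult_1_l. apply Rinv_le_contravar; auto.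
Qed.
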